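(* Let $K$ be a field of characteristic $0$, let $L=\mathcal{L}(x,y)$ be the free Lie algebra over $K$ freely generated by $x,y$, and let $\delta$ be the derivation of $L$ determined by $\delta(x)=0$, $\delta(y)=x$. Let $k\geq 0$ be an integer and $p\in L$, and put $f=[p,\delta^k(p)]$. Then $f$ is a $K$-linear combination of pseudodeterminants of degree $(k,0)$, i.e. of elements $U^{(k,0)}_{A,B}=[\delta^k(A),B]-[A,\delta^k(B)]$ with $A,B$ Hall monomials.
   Context: For Hall monomials $A,B$ of $L$ (elements of the Hall basis of $L$, built from basic words with respect to the degree-lexicographic order with $x<y$) and integers $m,k\geq 0$, the pseudodeterminant of degree $(m,k)$ is $U^{(m,k)}_{A,B}=[\delta^m(A),\delta^{k}(B)]-[\delta^{k}(A),\delta^m(B)]$. *)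

(* Defs.v *)
From HB Require Import structures.
From mathcomp Require Import all_boot all_order all_algebra.
Set Implicit Arguments. Unset Strict Implicit. Unset Printing Implicit Defensive.
Import Order.TTheory GRing.Theory Num.Theory.
Local Open Scope ring_scope.

(* Model: the free Lie algebra L(x,y) is realised (Witt / PBW) as the Lie
   subalgebra generated by x and y of the free associative algebra on x,y,
   with bracket [a,b] = ab - ba.  Elements of the ambient algebra are
   represented as coefficient functions on words (seq bool); the letter x is
   [false] and y is [true] (so x < y).  The product is the Cauchy product
   (only finitely many splittings of a word), so this is K<<x,y>>, which
   contains K<x,y>. *)

Section FreeLie.
Variable K : fieldType.

Definition ser := seq bool -> K.

Definition szero : ser := fun _ => 0.
Definition sadd (f g : ser) : ser := fun w => f w + g w.
Definition sscale (c : K) (f : ser) : ser := fun w => c * f w.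
Definition smul (f g : ser) : ser :=
  fun w => \sum_(i < (size w).+1) f (take i w) * g (drop i w).
Definition sbr (f g : ser) : ser := fun w => smul f g w - smul g f w.

Definition gen (b : bool) : ser := fun w => (w == [:: b])%:R.
Definition sx : ser := gen false.
Definition sy : ser := gen true.

Inductive in_freeLie : ser -> Prop :=
| fl_gen b : in_freeLie (gen b)
| fl_add f g : in_freeLie f -> in_freeLie g -> in_freeLie (sadd f g)
| fl_scale c f : in_freeLie f -> in_freeLie (sscale c f)
| fl_br f g : in_freeLie f -> in_freeLie g -> in_freeLie (sbr f g).

(* The derivation delta with delta(x) = 0, delta(y) = x, extended to the
   associative algebra (a derivation there, hence of the commutator bracket,
   and it restricts to the unique Lie derivation of L with these values):
   on a word u, delta(u) = sum over occurrences of y in u of the word with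
   that y replaced by x. *)
Definition sdelta (f : ser) : ser :=
  fun w => \sum_(i < size w)
             (if nth true w i == false then f (set_nth false w i true) else 0).

Definition sdeltan (n : nat) (f : ser) : ser := iter n sdelta f.

Definition pseudodet (m k : nat) (A B : ser) : ser :=
  fun w => sbr (sdeltan m A) (sdeltan k B) w - sbr (sdeltan k A) (sdeltan m B) w.

(* Hall basis: basic (Lyndon) words over x < y and their standard bracketing *)
Fixpoint lexlt (u v : seq bool) : bool :=
  match u, v with
  | _, [::] => false
  | [::], _ :: _ => true
  | a :: u', b :: v' => (~~ a && b) || ((a == b) && lexlt u' v')
  end.

Definition lyndon (w : seq bool) : bool :=
  (0 < size w)%N && [forall i : 'I_(size w), (0 < i)%N ==> lexlt w (drop i w)].

(* split point of the standard factorisation: w = u v with v the longest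
   proper Lyndon suffix *)
Definition sf_idx (w : seq bool) : nat :=
  (find (fun i => lyndon (drop i w)) (iota 1 (size w).-1)).+1.

Fixpoint hall_aux (n : nat) (w : seq bool) : ser :=
  match n with
  | 0 => szero
  | n'.+1 =>
      if size w == 1%N then gen (head false w)
      else sbr (hall_aux n' (take (sf_idx w) w)) (hall_aux n' (drop (sf_idx w) w))
  end.

Definition hall_mono (w : seq bool) : ser := hall_aux (size w) w.

Definition is_hall (A : ser) : Prop := exists w, lyndon w /\ A = hall_mono w.

End FreeLie.

(* Main.v *)
Require Import Defs.
From HB Require Import structures.
From mathcomp Require Import all_boot all_order all_algebra.
Set Warnings "-notation-overridden,-ambiguous-paths".
From mathcomp Require Import ring zify.
From Stdlib Require Import FunctionalExtensionality.
Import GRing.Theory.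

Lemma lexlt_irr u : lexlt u u = false.
Proof. by elim: u => [|a u IH] //=; rewrite IH andbF; case: a. Qed.

Lemma lexlt_trans u v w : lexlt u v -> lexlt v w -> lexlt u w.
Proof.
elim: u v w => [|a u IH] [|b v] [|c w] //=.
case: a; case: b; case: c => //=; rewrite ?eqxx /=; try exact: IH.
Qed.

Lemma lexlt_total u v : u != v -> lexlt u v || lexlt v u.
Proof.
elim: u v => [|a u IH] [|b v] //=.
case: a; case: b => //=; rewrite eqseq_cons eqxx /=; exact: IH.
Qed.

Lemma lexlt_asym u v : lexlt u v -> lexlt v u = false.
Proof. move=> h; apply/negP => h2; have := lexlt_trans _ _ _ h h2; by rewrite lexlt_irr. Qed.

Lemma lexlt_cat2l a u v : lexlt (a ++ u) (a ++ v) = lexlt u v.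
Proof. by elim: a => [|x a IH] //=; rewrite eqxx IH; case: x. Qed.

Lemma lexlt_prefix u s : lexlt u (u ++ s) = (s != [::]).
Proof. by rewrite -{1}(cats0 u) lexlt_cat2l; case: s. Qed.

Definition strong (u v : seq bool) :=
  exists p s t, u = p ++ false :: s /\ v = p ++ true :: t.

Lemma strong_lexlt u v : strong u v -> lexlt u v.
Proof. by case=> p [s [t [-> ->]]]; rewrite lexlt_cat2l. Qed.

Lemma strong_cat u v x y : strong u v -> strong (u ++ x) (v ++ y).
Proof. by case=> p [s [t [-> ->]]]; exists p, (s ++ x), (t ++ y); rewrite -!catA. Qed.

Lemma lexlt_cases u v : lexlt u v -> (exists s, s != [::] /\ v = u ++ s) \/ strong u v.
Proof.
elim: u v => [|a u IH] [|b v] //=.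
  by move=> _; left; exists (b :: v).
case: a; case: b => //=; rewrite ?eqxx /=.
- move/IH => [[s [hs ->]]|[p [s [t [-> ->]]]]].
    by left; exists s.
  by right; exists (true :: p), s, t.
- by move=> _; right; exists [::], u, v.
- move/IH => [[s [hs ->]]|[p [s [t [-> ->]]]]].
    by left; exists s.
  by right; exists (false :: p), s, t.
Qed.

Lemma lexle_cat v s : v != [::] -> (v == s) || lexlt v s -> lexlt v (s ++ v).
Proof.
move=> hv /orP [/eqP <-|]; first by rewrite lexlt_prefix.
move/lexlt_cases => [[t [ht ->]]|hs].
  by rewrite -catA lexlt_prefix; case: t ht.
rewrite -[X in lexlt X _]cats0; exact/strong_lexlt/strong_cat.
Qed.

Lemma lexlt_short_strong u u' : size u' < size u -> lexlt u u' -> strong u u'.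
Proof.
move=> hs /lexlt_cases [[s [hs' e]]|//].
by move: hs; rewrite e size_cat; case: s hs' {e} => //= x s _; lia.
Qed.

Lemma lyndon_drop w i : lyndon w -> 0 < i -> i < size w -> lexlt w (drop i w).
Proof.
case/andP => _ /forallP h hi hiw.
by have := h (Ordinal hiw); rewrite /= hi.
Qed.

Lemma lyndon_intro w : 0 < size w ->
  (forall i, 0 < i -> i < size w -> lexlt w (drop i w)) -> lyndon w.
Proof.
move=> hs h; rewrite /lyndon hs /=; apply/forallP => -[i hi] /=.
by apply/implyP => h0; exact: h.
Qed.

Lemma lyndon_size w : lyndon w -> 0 < size w.
Proof. by case/andP. Qed.

Lemma lyndon_cat u v : lyndon u -> lyndon v -> lexlt u v ->
  lyndon (u ++ v) /\ lexlt (u ++ v) v.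
Proof.
move=> hu hv huv.
have hlt : lexlt (u ++ v) v.
  case: (lexlt_cases _ _ huv) => [[t [ht e]]|hs].
    have : lexlt v t.
      have -> : t = drop (size u) v by rewrite e drop_size_cat.
      apply: lyndon_drop => //; first exact: lyndon_size.
      by rewrite e size_cat; case: t ht {e} => //= *; lia.
    by rewrite {2}e -(lexlt_cat2l u) -e.
  by rewrite -[X in lexlt _ X]cats0; apply/strong_lexlt/strong_cat.
split=> //; apply: lyndon_intro => [|i hi0 hi]; first by rewrite size_cat; have := lyndon_size _ hu; lia.
rewrite drop_cat; case: ltnP => hiu.
  apply/strong_lexlt/strong_cat/lexlt_short_strong; first by rewrite size_drop; lia.
  exact: lyndon_drop.
case: (posnP (i - size u)) => h0.
  by rewrite h0 drop0.
apply: lexlt_trans hlt _; apply: lyndon_drop => //.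
by move: hi; rewrite size_cat; lia.
Qed.

Lemma seq_min (s : seq (seq bool)) : s != [::] ->
  exists2 m, m \in s & forall x, x \in s -> x != m -> lexlt m x.
Proof.
elim: s => [|a s IH] // _.
case: (eqVneq s [::]) => [->|hs].
  by exists a => [|x]; rewrite ?inE // => /eqP ->; rewrite eqxx.
case: (IH hs) => m hm hmin.
case: (eqVneq a m) => [eam|ham]; first subst m.
  exists a; first by rewrite inE eqxx.
  move=> x; rewrite inE => /orP [/eqP -> |hx]; first by rewrite eqxx.
  exact: hmin.
case/orP: (lexlt_total _ _ ham) => ha.
  exists a; first by rewrite inE eqxx.
  move=> x; rewrite inE => /orP [/eqP -> |hx]; first by rewrite eqxx.
  case: (eqVneq x m) => [-> //|hxm] _.
  exact: lexlt_trans ha (hmin _ hx hxm).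
exists m; first by rewrite inE hm orbT.
move=> x; rewrite inE => /orP [/eqP -> //|hx]; exact: hmin.
Qed.

Lemma min_suffix w : 1 < size w -> exists j, [/\ 0 < j, j < size w &
  forall i, 0 < i -> i < size w -> i != j -> lexlt (drop j w) (drop i w)].
Proof.
move=> hw.
have : [seq drop i w | i <- iota 1 (size w).-1] != [::].
  by case: (size w) hw => [|[|n]].
case/seq_min => m /mapP [j0 hj ->] hmin.
have [j ej] : exists j : nat, j0 = j by exists j0.
subst j0.
move: hj; rewrite mem_iota add1n prednK ?(ltnW hw) // => /andP [hj1 hj2].
exists j; split; [lia | lia |].
move=> i hi0 hi hij; apply: hmin.
  by apply/mapP; exists i => //; rewrite mem_iota add1n prednK ?(ltnW hw) //; lia.
apply/negP => /eqP /(congr1 size); rewrite !size_drop => e; move/eqP: hij; apply. have e2 : (size w - i = size w - j)%N by exact: e. clear e. lia.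
Qed.

Lemma min_suffix_lyndon w j : 0 < j -> j < size w ->
  (forall i, 0 < i -> i < size w -> i != j -> lexlt (drop j w) (drop i w)) ->
  lyndon (drop j w).
Proof.
move=> hj0 hj hmin; apply: lyndon_intro => [|l hl0 hl]; first by rewrite size_drop; lia.
rewrite drop_drop; apply: hmin; move: hl; rewrite size_drop; lia.
Qed.

Lemma min_suffix_notlyndon w j i : 0 < j -> j < size w ->
  (forall i, 0 < i -> i < size w -> i != j -> lexlt (drop j w) (drop i w)) ->
  0 < i -> i < j -> ~~ lyndon (drop i w).
Proof.
move=> hj0 hj hmin hi0 hij; apply/negP => hl.
have := lyndon_drop _ (j - i) hl; rewrite drop_drop subnK ?(ltnW hij) // size_drop.
move=> /(_ ltac:(lia) ltac:(lia)) h1.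
have h2 := hmin i hi0 ltac:(lia) ltac:(lia).
by rewrite (lexlt_asym _ _ h1) in h2.
Qed.

Lemma sf_idx_eq w j : 0 < j -> j < size w ->
  (forall i, 0 < i -> i < size w -> i != j -> lexlt (drop j w) (drop i w)) ->
  sf_idx w = j.
Proof.
move=> hj0 hj hmin; rewrite /sf_idx.
set P := (fun i => lyndon (drop i w)).
set s := iota 1 (size w).-1.
have hnth : forall l, l < (size w).-1 -> nth 0 s l = l.+1.
  by move=> l hl; rewrite /s nth_iota.
have hP : P (nth 0 s j.-1) by rewrite hnth ?prednK //; [exact: min_suffix_lyndon| move: hj hj0; rewrite -!subn1; lia].
case: (ltngtP (find P s) j.-1) => h.
- have hh : has P s by apply/hasP; exists (nth 0 s j.-1) => //; apply: mem_nth; rewrite size_iota; move: hj hj0; rewrite -!subn1; lia.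
  have := nth_find 0 hh; rewrite hnth; last by move: h hj; rewrite -!subn1; lia.
  by rewrite /P; move/negP: (min_suffix_notlyndon w j (find P s).+1 hj0 hj hmin ltac:(lia) ltac:(move: h; rewrite -subn1; lia)).
- by have := before_find 0 h; rewrite hP.
- by rewrite h prednK.
Qed.

Lemma sf_spec w : 1 < size w -> [/\ 0 < sf_idx w, sf_idx w < size w &
  forall i, 0 < i -> i < size w -> i != sf_idx w -> lexlt (drop (sf_idx w) w) (drop i w)].
Proof.
move=> hw; case: (min_suffix _ hw) => j [hj0 hj hmin].
by rewrite (sf_idx_eq _ _ hj0 hj hmin).
Qed.

Lemma sf_lyndon w : lyndon w -> 1 < size w ->
  [/\ lyndon (take (sf_idx w) w), lyndon (drop (sf_idx w) w)
    & lexlt (take (sf_idx w) w) (drop (sf_idx w) w)].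
Proof.
move=> hw hs; case: (sf_spec _ hs); set j := sf_idx w => hj0 hj hmin.
set u := take j w; set v := drop j w.
have ew : w = u ++ v by rewrite cat_take_drop.
have hsu : size u = j by rewrite size_take hj.
have hv : lyndon v by exact: min_suffix_lyndon.
have huw : lexlt u w.
  rewrite [X in lexlt _ X]ew lexlt_prefix; apply/eqP => /(congr1 size); rewrite /v size_drop /=; lia.
have hwv : lexlt w v by exact: lyndon_drop.
split => //; last exact: lexlt_trans huw hwv.
have ev : v = drop j w by [].
clearbody u v j.
apply: lyndon_intro => [|i hi0 hi]; first by lia.
set u' := drop i u.
have hsu' : size u' = (j - i)%N by rewrite size_drop hsu.
have hne : u != u'.
  apply/negP => /eqP e; move: hsu'; rewrite -e hsu; lia.
have hwl : lexlt w (u' ++ v).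
  have := lyndon_drop _ i hw hi0 ltac:(lia).
  by rewrite {2}ew drop_cat hsu ifT //; lia.
case/orP: (lexlt_total _ _ hne) => // h.
case: (lexlt_cases _ _ h) => [[s [hs' es]]|hst].
  have ew2 : w = u' ++ (s ++ v) by rewrite ew es catA.
  move: hwl; rewrite ew2 lexlt_cat2l => h1.
  have : lexlt v (drop (j - i) w).
    rewrite ev; apply: hmin; lia.
  rewrite ew2 drop_size_cat // => h2.
  by rewrite (lexlt_asym _ _ h1) in h2.
have := strong_lexlt _ _ (strong_cat _ _ v v hst); rewrite -ew => h2.
by rewrite (lexlt_asym _ _ h2) in hwl.
Qed.

Lemma sf_cat u v : lyndon u -> lyndon v -> lexlt u v ->
  (size u == 1%N) || (v == drop (sf_idx u) u) || lexlt v (drop (sf_idx u) u) ->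
  sf_idx (u ++ v) = size u.
Proof.
move=> hu hv huv hc.
have hu0 := lyndon_size _ hu; have hv0 := lyndon_size _ hv.
apply: sf_idx_eq; rewrite ?size_cat; [lia|lia|].
move=> i hi0 hi hne; rewrite drop_size_cat //.
rewrite drop_cat; case: ltnP => hiu.
  have hsu : 1 < size u by lia.
  have hv' : v != [::] by case: (v) hv0.
  apply: lexle_cat => //.
  move: hc; rewrite eqn_leq leqNgt hsu /=.
  case: (sf_spec _ hsu) => hj0 hj hmin.
  case: (eqVneq i (sf_idx u)) => [->//|hij] hvj.
  apply/orP; right.
  move/orP: hvj => [/eqP ->|hvj]; first exact: hmin.
  exact: lexlt_trans hvj (hmin _ hi0 hiu hij).
apply: lyndon_drop => //; move: hi hne hiu; rewrite ?size_cat => *; lia.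
Qed.

Local Open Scope ring_scope.
Section Ser.
Variable K : fieldType.
Implicit Types f g h : ser K.

Lemma smulE f g w : smul f g w = \sum_(i < (size w).+1) f (take i w) * g (drop i w).
Proof. by []. Qed.

Lemma smul_nil f g : smul f g [::] = f [::] * g [::].
Proof. by rewrite smulE big_ord_recl big_ord0 addr0. Qed.

Lemma smul_cons f g a w :
  smul f g (a :: w) = f [::] * g (a :: w) + smul (fun u => f (a :: u)) g w.
Proof. by rewrite !smulE big_ord_recl /=. Qed.

Lemma smul_lin1 (c : K) f1 f2 g w :
  smul (fun u => c * f1 u + f2 u) g w = c * smul f1 g w + smul f2 g w.
Proof.
rewrite !smulE mulr_sumr -big_split /=; apply: eq_bigr => i _.
by rewrite mulrDl mulrA.
Qed.

Lemma smulA f g h w : smul (smul f g) h w = smul f (smul g h) w.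
Proof.
elim: w f => [|a w IH] f; first by rewrite !smul_nil mulrA.
rewrite !smul_cons smul_nil.
have -> : (fun u => smul f g (a :: u)) =
  (fun u => f [::] * g (a :: u) + smul (fun u => f (a :: u)) g u).
  by apply: functional_extensionality => u; rewrite smul_cons.
rewrite smul_lin1 IH mulrDr !mulrA addrA.
by [].
Qed.

Lemma smul_suml (T : Type) (s : seq T) (c : T -> K) (F : T -> ser K) g w :
  smul (fun u => \sum_(x <- s) c x * F x u) g w = \sum_(x <- s) c x * smul (F x) g w.
Proof.
rewrite smulE.
under eq_bigr do rewrite mulr_suml.
rewrite exchange_big /=; apply: eq_bigr => x _.
by rewrite smulE mulr_sumr; apply: eq_bigr => i _; rewrite mulrA.
Qed.

Lemma smul_sumr (T : Type) (s : seq T) (c : T -> K) (F : T -> ser K) g w :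
  smul g (fun u => \sum_(x <- s) c x * F x u) w = \sum_(x <- s) c x * smul g (F x) w.
Proof.
rewrite smulE.
under eq_bigr do rewrite mulr_sumr.
rewrite exchange_big /=; apply: eq_bigr => x _.
rewrite smulE mulr_sumr; apply: eq_bigr => i _.
by rewrite mulrA mulrCA mulrA.
Qed.

Lemma sbrE f g w : sbr f g w = smul f g w - smul g f w.
Proof. by []. Qed.

Lemma sbr_suml (T : Type) (s : seq T) (c : T -> K) (F : T -> ser K) g w :
  sbr (fun u => \sum_(x <- s) c x * F x u) g w = \sum_(x <- s) c x * sbr (F x) g w.
Proof.
rewrite sbrE smul_suml smul_sumr -sumrB; apply: eq_bigr => x _.
by rewrite sbrE mulrBr.
Qed.

Lemma sbr_sumr (T : Type) (s : seq T) (c : T -> K) (F : T -> ser K) g w :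
  sbr g (fun u => \sum_(x <- s) c x * F x u) w = \sum_(x <- s) c x * sbr g (F x) w.
Proof.
rewrite sbrE smul_suml smul_sumr -sumrB; apply: eq_bigr => x _.
by rewrite sbrE mulrBr.
Qed.

Lemma sbr_anti f g w : sbr f g w = - sbr g f w.
Proof. by rewrite !sbrE opprB. Qed.

Lemma smul_brl f g h w : smul (sbr f g) h w = smul (smul f g) h w - smul (smul g f) h w.
Proof.
rewrite !smulE -sumrB; apply: eq_bigr => i _; by rewrite sbrE mulrBl.
Qed.

Lemma smul_brr f g h w : smul f (sbr g h) w = smul f (smul g h) w - smul f (smul h g) w.
Proof.
rewrite !smulE -sumrB; apply: eq_bigr => i _; by rewrite sbrE mulrBr.
Qed.

Lemma jacobi f g h w :
  sbr (sbr f g) h w = sbr (sbr f h) g w + sbr f (sbr g h) w.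
Proof.
rewrite !sbrE !smul_brl !smul_brr !smulA; ring.
Qed.

Lemma sdelta_lin (c : K) f g w :
  sdelta (fun u => c * f u + g u) w = c * sdelta f w + sdelta g w.
Proof.
rewrite /sdelta mulr_sumr -big_split; apply: eq_bigr => i _ /=.
by case: ifP => _; rewrite ?mulr0 ?addr0.
Qed.

Lemma sdelta_sum (T : Type) (s : seq T) (c : T -> K) (F : T -> ser K) w :
  sdelta (fun u => \sum_(x <- s) c x * F x u) w = \sum_(x <- s) c x * sdelta (F x) w.
Proof.
elim: s w => [|a s IH] w.
  rewrite big_nil /sdelta big1 // => i _.
  by rewrite big_nil; case: ifP.
rewrite big_cons -IH -sdelta_lin; congr sdelta.
by apply: functional_extensionality => u; rewrite big_cons.
Qed.

Lemma sdeltan_sum k (T : Type) (s : seq T) (c : T -> K) (F : T -> ser K) :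
  sdeltan k (fun u => \sum_(x <- s) c x * F x u) =
  (fun w => \sum_(x <- s) c x * sdeltan k (F x) w).
Proof.
elim: k => [|k IH] //=.
rewrite /sdeltan /= -/(sdeltan k _) IH.
by apply: functional_extensionality => w; rewrite sdelta_sum.
Qed.
End Ser.

Fixpoint wordsN (n : nat) : seq (seq bool) :=
  [::] :: (if n is n'.+1 then [seq b :: w | b <- [:: false; true], w <- wordsN n'] else [::]).

Lemma mem_wordsN n w : (size w <= n)%N -> w \in wordsN n.
Proof.
elim: n w => [|n IH] [|b w] //= hs.
rewrite in_cons !mem_cat; case: b; apply/orP; right; apply/orP; [right; apply/orP; left|left];
  apply/map_f; exact: IH.
Qed.

Definition cnt N u v := count (fun h => lexlt h u || lexlt h v) (wordsN N).

Lemma count_lt (T : eqType) (p q : pred T) (s : seq T) z :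
  (forall x, p x -> q x) -> z \in s -> q z -> ~~ p z -> (count p s < count q s)%N.
Proof.
move=> hpq; elim: s => [|a s IH] //=; rewrite inE => /orP [/eqP <-|hz] hq hp.
  rewrite (negbTE hp) hq add0n add1n ltnS; exact: sub_count.
have h1 := IH hz hq hp.
have hpa : (p a <= q a)%N by case pa: (p a) => //; rewrite hpq.
rewrite -addnS; exact: leq_add.
Qed.

Lemma cnt_lt N a b u v : lexlt a v -> lexlt b v -> (size a <= N)%N -> (size b <= N)%N ->
  (cnt N a b < cnt N u v)%N.
Proof.
move=> hav hbv ha hb; rewrite /cnt.
apply: (count_lt _ _ _ _ (if lexlt a b then b else a)).
- move=> h /orP [] hh; apply/orP; right; exact: lexlt_trans hh _.
- by case: ifP => _; apply: mem_wordsN.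
- by case: ifP => _; rewrite ?hav ?hbv orbT.
- case: ifP => hab; first by rewrite lexlt_irr orbF lexlt_asym.
  by rewrite lexlt_irr hab.
Qed.

Lemma cnt_sym N u v : cnt N u v = cnt N v u.
Proof. by rewrite /cnt; apply: eq_count => h; rewrite orbC. Qed.

Section Span.
Set Implicit Arguments. Unset Strict Implicit.
Variable K : fieldType.
Local Notation H := (hall_mono K).

Definition span (P : pred (seq bool)) (f : ser K) :=
  exists s : seq (K * seq bool), all (fun x => lyndon x.2 && P x.2) s /\
    f = (fun u => \sum_(x <- s) x.1 * H x.2 u).

Lemma span0 P : span P (fun _ => 0).
Proof.
exists [::]; split => //; apply: functional_extensionality => u; by rewrite big_nil.
Qed.

Lemma span_lin P c f g : span P f -> span P g -> span P (fun u => c * f u + g u).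
Proof.
move=> [s1 [h1 ->]] [s2 [h2 ->]].
exists ([seq (c * x.1, x.2) | x <- s1] ++ s2); split.
  by rewrite all_cat h2 andbT all_map.
apply: functional_extensionality => u.
by rewrite big_cat big_map /= mulr_sumr; congr (_ + _); apply: eq_bigr => x _; rewrite mulrA.
Qed.

Lemma span_ext P f g : f = g -> span P f -> span P g.
Proof. by move=> ->. Qed.

Lemma span_scale P c f : span P f -> span P (fun u => c * f u).
Proof.
move=> h; apply: span_ext (span_lin c h (span0 P)).
by apply: functional_extensionality => u; rewrite addr0.
Qed.

Lemma span_add P f g : span P f -> span P g -> span P (fun u => f u + g u).
Proof.
move=> h1 h2; apply: span_ext (span_lin 1 h1 h2).
by apply: functional_extensionality => u; rewrite mul1r.
Qed.

Lemma span_sum P (T : Type) (s : seq T) (c : T -> K) (F : T -> ser K) :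
  (forall x, List.In x s -> span P (F x)) -> span P (fun u => \sum_(x <- s) c x * F x u).
Proof.
elim: s => [|a s IH] hs.
  by apply: span_ext (span0 P); apply: functional_extensionality => u; rewrite big_nil.
apply: span_ext (span_lin (c a) (hs a (or_introl erefl)) (IH _)).
  by apply: functional_extensionality => u; rewrite big_cons.
by move=> x hx; apply: hs; right.
Qed.

Lemma all_In (T : Type) (p : pred T) s x : all p s -> List.In x s -> p x.
Proof. by elim: s => [|a s IH] //= /andP [ha hs] [<-|hx] //; exact: IH. Qed.

Lemma span_mono (P P' : pred (seq bool)) f : (forall h, P h -> P' h) -> span P f -> span P' f.
Proof.
move=> hP [s [hs ->]]; exists s; split => //.
apply/allP => x /(allP hs) /andP [-> /hP] //.
Qed.

Lemma span_hall (P : pred (seq bool)) w : lyndon w -> P w -> span P (H w).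
Proof.
move=> hw hp; exists [:: (1, w)]; split; first by rewrite /= hw hp.
by apply: functional_extensionality => u; rewrite big_cons big_nil mul1r addr0.
Qed.

Lemma hall_fuel n m w : (0 < size w)%N -> (size w <= n)%N -> (size w <= m)%N ->
  hall_aux K n w = hall_aux K m w.
Proof.
elim: n m w => [|n IH] [|m] w h0 hn hm //=; try lia.
case: ifP => // hs1.
have hs : (1 < size w)%N by move: hs1 h0 => /eqP; lia.
case: (sf_spec _ hs) => hj0 hj _.
have ht : size (take (sf_idx w) w) = sf_idx w by rewrite size_take hj.
have hd : size (drop (sf_idx w) w) = (size w - sf_idx w)%N by rewrite size_drop.
by rewrite (IH m (take _ _)) ?ht ?(IH m (drop _ _)) ?hd //; lia.
Qed.

Lemma hall_br w : (1 < size w)%N ->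
  H w = sbr (H (take (sf_idx w) w)) (H (drop (sf_idx w) w)).
Proof.
move=> hs; case: (sf_spec _ hs) => hj0 hj _.
rewrite /hall_mono; case e: (size w) => [|n]; first by rewrite e in hs.
rewrite /= e; have -> : (n.+1 == 1%N) = false by apply/negbTE; move: hs; rewrite e; lia.
have ht : size (take (sf_idx w) w) = sf_idx w by rewrite size_take hj.
have hd : size (drop (sf_idx w) w) = (size w - sf_idx w)%N by rewrite size_drop.
rewrite (@hall_fuel n (size (take (sf_idx w) w)) (take (sf_idx w) w)); try lia.
rewrite (@hall_fuel n (size (drop (sf_idx w) w)) (drop (sf_idx w) w)) //; lia.
Qed.

Lemma hall_gen b : H [:: b] = gen K b.
Proof. by []. Qed.

Lemma lyndon1 b : lyndon [:: b].
Proof. by apply: lyndon_intro => // -[|i]. Qed.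

Lemma hall_cat u v : lyndon u -> lyndon v -> lexlt u v ->
  (size u == 1%N) || (v == drop (sf_idx u) u) || lexlt v (drop (sf_idx u) u) ->
  H (u ++ v) = sbr (H u) (H v).
Proof.
move=> hu hv huv hc.
have hu0 := lyndon_size _ hu; have hv0 := lyndon_size _ hv.
rewrite hall_br ?size_cat; last lia.
by rewrite (sf_cat _ _ hu hv huv hc) take_size_cat // drop_size_cat.
Qed.

End Span.
Unset Implicit Arguments. Set Strict Implicit.

Section Claim.
Variable K : fieldType.
Local Notation H := (hall_mono K).

Definition Q (u v : seq bool) : pred (seq bool) :=
  fun h => (lexlt h u || lexlt h v) && (size h <= size u + size v)%N.

Lemma claim_lt N
  (IHN : forall u v, lyndon u -> lyndon v -> (size u + size v <= N)%N ->
         span (Q u v) (sbr (H u) (H v))) u v :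
  lyndon u -> lyndon v -> lexlt u v -> (size u + size v <= N.+1)%N ->
  (forall u' v', lyndon u' -> lyndon v' -> (size u' + size v' <= N.+1)%N ->
     (cnt N.+1 u' v' < cnt N.+1 u v)%N -> span (Q u' v') (sbr (H u') (H v'))) ->
  span (Q u v) (sbr (H u) (H v)).
Proof.
move=> hu hv huv hs IHc.
have hu0 := lyndon_size _ hu; have hv0 := lyndon_size _ hv.
case: (boolP ((size u == 1%N) || (v == drop (sf_idx u) u) || lexlt v (drop (sf_idx u) u))) => [hc|hn].
  rewrite -(hall_cat K hu hv huv hc).
  case: (lyndon_cat _ _ hu hv huv) => hl hlt.
  by apply: span_hall => //; rewrite /Q hlt orbT size_cat leqnn.
move: hn; rewrite !negb_or => /andP [/andP [hsu1 hvne] hvlt].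
have hsu : (1 < size u)%N by move: hsu1 hu0 => /eqP; lia.
case: (sf_spec _ hsu) => hj0 hj _.
case: (sf_lyndon _ hu hsu) => hu1 hu2 h12.
have ebr := hall_br K hsu.
move: hvne hvlt hu1 hu2 h12 ebr hj0 hj.
set j := sf_idx u; set u1 := take j u; set u2 := drop j u.
move=> hvne hvlt hu1 hu2 h12 ebr hj0 hj.
have hlt2 : lexlt u2 v.
  by case/orP: (lexlt_total _ _ hvne) => // h; rewrite h in hvlt.
have hs1 : size u1 = j by rewrite size_take hj.
have hs2 : size u2 = (size u - j)%N by rewrite size_drop.
clearbody u1 u2 j.
have h1v : lexlt u1 v by exact: lexlt_trans h12 hlt2.
have e : sbr (H u) (H v) =
  (fun w => 1 * sbr (sbr (H u1) (H v)) (H u2) w + sbr (H u1) (sbr (H u2) (H v)) w).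
  by apply: functional_extensionality => w; rewrite mul1r ebr jacobi.
rewrite e; apply: span_lin.
- case: (IHN u1 v hu1 hv ltac:(clear - hs hs1 hs2 hj hj0; lia)) => s1 [hall1 e1]; rewrite e1.
  apply: (span_ext (f := fun w => \sum_(x <- s1) x.1 * sbr (H x.2) (H u2) w)).
    by apply: functional_extensionality => w; rewrite sbr_suml.
  apply: span_sum => x hx.
  move: (all_In hall1 hx) => /andP [hx1 /andP [hxlt hxs]].
  have hxv : lexlt x.2 v.
    by case/orP: hxlt => // h; exact: lexlt_trans h h1v.
  have hsz2 : (size x.2 + size u2 <= N.+1)%N by clear - hxs hs hs1 hs2 hj hj0; lia.
  apply: (span_mono (P := Q x.2 u2)); last first.
    apply: (IHc x.2 u2 hx1 hu2 hsz2).
    by apply: cnt_lt => //; clear - hxs hs hs1 hs2 hj hj0; lia.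
  move=> h /andP [hlt hsz]; rewrite /Q; apply/andP; split; last by clear - hsz hxs hs hs1 hs2 hj hj0; lia.
  by apply/orP; right; case/orP: hlt => hh; [exact: lexlt_trans hh hxv | exact: lexlt_trans hh hlt2].
- case: (IHN u2 v hu2 hv ltac:(clear - hs hs1 hs2 hj hj0; lia)) => s2 [hall2 e2]; rewrite e2.
  apply: (span_ext (f := fun w => \sum_(x <- s2) x.1 * sbr (H u1) (H x.2) w)).
    by apply: functional_extensionality => w; rewrite sbr_sumr.
  apply: span_sum => x hx.
  move: (all_In hall2 hx) => /andP [hx1 /andP [hxlt hxs]].
  have hxv : lexlt x.2 v.
    by case/orP: hxlt => // h; exact: lexlt_trans h hlt2.
  have hsz2 : (size u1 + size x.2 <= N.+1)%N by clear - hxs hs hs1 hs2 hj hj0; lia.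
  apply: (span_mono (P := Q u1 x.2)); last first.
    apply: (IHc u1 x.2 hu1 hx1 hsz2).
    by apply: cnt_lt => //; clear - hxs hs hs1 hs2 hj hj0; lia.
  move=> h /andP [hlt hsz]; rewrite /Q; apply/andP; split; last by clear - hsz hxs hs hs1 hs2 hj hj0; lia.
  by apply/orP; right; case/orP: hlt => hh; [exact: lexlt_trans hh h1v | exact: lexlt_trans hh hxv].
Qed.

Lemma claim N : forall u v, lyndon u -> lyndon v -> (size u + size v <= N)%N ->
  span (Q u v) (sbr (H u) (H v)).
Proof.
elim: N => [|N IHN] u v hu hv hs.
  by have := lyndon_size _ hu; clear -hs; lia.
suff: forall c u v, cnt N.+1 u v = c -> lyndon u -> lyndon v ->
    (size u + size v <= N.+1)%N -> span (Q u v) (sbr (H u) (H v)).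
  by move=> /(_ _ u v erefl); apply.
clear u v hu hv hs.
elim/ltn_ind => c IHc u v ec hu hv hs.
have IHc' : forall u' v', lyndon u' -> lyndon v' -> (size u' + size v' <= N.+1)%N ->
    (cnt N.+1 u' v' < cnt N.+1 u v)%N -> span (Q u' v') (sbr (H u') (H v')).
  by move=> u' v' h1 h2 h3 h4; rewrite ec in h4; exact: (IHc _ h4 u' v' erefl h1 h2 h3).
case: (eqVneq u v) => [<-|huv].
  apply: (span_ext (f := fun _ => 0)); last exact: span0.
  by apply: functional_extensionality => w; rewrite sbrE subrr.
case/orP: (lexlt_total _ _ huv) => hlt.
  exact: (claim_lt N IHN u v hu hv hlt hs IHc').
have hs' : (size v + size u <= N.+1)%N by rewrite addnC.
have := claim_lt N IHN v u hv hu hlt hs'.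
move/(_ ltac:(by move=> u1 v1 h1 h2 h3 h4; apply: IHc' => //; rewrite (cnt_sym _ u v))) => h.
apply: (span_ext (f := fun w => (-1) * sbr (H v) (H u) w)).
  by apply: functional_extensionality => w; rewrite [RHS]sbr_anti mulN1r.
apply: span_scale; apply: span_mono h => h0; by rewrite /Q orbC addnC.
Qed.

Lemma span_all (f : ser K) : in_freeLie f -> span predT f.
Proof.
elim => [b|f1 g1 _ hf _ hg|c f1 _ hf|f1 g1 _ hf _ hg].
- rewrite -(hall_gen K b); apply: span_hall => //; exact: lyndon1.
- exact: span_add hf hg.
- exact: span_scale.
- case: hf => s1 [h1 ->]; case: hg => s2 [h2 ->].
  apply: (span_ext (f := fun w => \sum_(x <- s1) x.1 * sbr (H x.2) (fun u => \sum_(x <- s2) x.1 * H x.2 u) w)).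
    by apply: functional_extensionality => w; rewrite sbr_suml.
  apply: span_sum => x hx.
  move: (all_In h1 hx) => /andP [hx1 _].
  apply: (span_ext (f := fun w => \sum_(y <- s2) y.1 * sbr (H x.2) (H y.2) w)).
    by apply: functional_extensionality => w; rewrite sbr_sumr.
  apply: span_sum => y hy.
  move: (all_In h2 hy) => /andP [hy1 _].
  exact: span_mono (claim (size x.2 + size y.2) x.2 y.2 hx1 hy1 (leqnn _)).
Qed.

End Claim.

Theorem proposition3p4 (K : fieldType) (charK0 : [pchar K] =i pred0)
  (k : nat) (p : ser K) (hp : in_freeLie p) :
  exists (n : nat) (c : 'I_n -> K) (A B : 'I_n -> ser K),
    (forall i, is_hall (A i) /\ is_hall (B i)) /\
    forall w, sbr p (sdeltan k p) w = \sum_(i < n) c i * pseudodet k 0 (A i) (B i) w.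
Proof.
have h2 : (2%:R : K) != 0.
  by move: (charK0 2); rewrite !inE /= => /negbT.
have h22 : (2%:R : K)^-1 + 2%:R^-1 = 1.
  by field.
case: (span_all K p hp) => s [hs ep].
pose H := hall_mono K.
pose pd := [seq ((- (2%:R : K)^-1) * x.1 * y.1, y.2, x.2) | x <- s, y <- s].
pose d : K * seq bool * seq bool := (0, [::], [::]).
exists (size pd), (fun i => (nth d pd i).1.1), (fun i => H (nth d pd i).1.2),
  (fun i => H (nth d pd i).2).
split.
  move=> i; have : nth d pd i \in pd := mem_nth d (ltn_ord i).
  case/allpairsP => -[x y] /= [hx hy ->] /=.
  move/allP: hs => hs.
  case/andP: (hs x hx) => hx1 _; case/andP: (hs y hy) => hy1 _.
  by split; [exists y.2 | exists x.2].
move=> w.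
have -> : \sum_(i < size pd) (nth d pd i).1.1 * pseudodet k 0 (H (nth d pd i).1.2) (H (nth d pd i).2) w
  = \sum_(z <- pd) z.1.1 * pseudodet k 0 (H z.1.2) (H z.2) w.
  by rewrite (big_nth d) big_mkord.
rewrite big_allpairs_dep /=.
set T := fun x y : K * seq bool => sbr (H x.2) (sdeltan k (H y.2)) w.
have hpd : forall x y : K * seq bool,
    pseudodet k 0 (H y.2) (H x.2) w = - T x y - T y x.
  move=> x y; rewrite /pseudodet /T /=.
  by rewrite [sbr (sdeltan k _) _ _]sbr_anti.
have -> : sbr p (sdeltan k p) w = \sum_(x <- s) x.1 * \sum_(y <- s) y.1 * T x y.
  rewrite ep sdeltan_sum sbr_suml; apply: eq_bigr => x _.
  by rewrite sbr_sumr.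
under [RHS]eq_bigr do under eq_bigr do rewrite hpd.
set S := \sum_(x <- s) x.1 * \sum_(y <- s) y.1 * T x y.
have hS : S = \sum_(x <- s) \sum_(y <- s) x.1 * y.1 * T x y.
  by rewrite /S; apply: eq_bigr => x _; rewrite mulr_sumr; apply: eq_bigr => y _; rewrite mulrA.
have hS' : S = \sum_(x <- s) \sum_(y <- s) x.1 * y.1 * T y x.
  by rewrite hS exchange_big /=; apply: eq_bigr => x _; apply: eq_bigr => y _; rewrite [y.1 * _]mulrC.
transitivity ((2%:R : K)^-1 * S + (2%:R : K)^-1 * S).
  by rewrite -mulrDl h22 mul1r.
rewrite {1}hS {1}hS' !mulr_sumr -big_split /=; apply: eq_bigr => x _.
rewrite !mulr_sumr -big_split /=; apply: eq_bigr => y _.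
ring.
Qed.
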